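(* Let $(\mathcal A,\mathcal T,(-))$ be a meta-tangible $\mathcal T$-triple and $a,b\in\mathcal T$. Then at least one of the following holds: (i) $a=(-)b$; (ii) $a+b=a$ (and then also $a^\circ+b=a^\circ$); (iii) $a^\circ+b=b$.
   Context: $(\mathcal A,+,\mathbb 0)$ commutative monoid, $\mathcal T\subseteq\mathcal A\setminus\{\mathbb 0\}$. A negation map is $(-):\mathcal A\to\mathcal A$ with $(-)(b_1+b_2)=(-)b_1+(-)b_2$, $(-)((-)b)=b$, $(-)\mathbb 0=\mathbb 0$, $(-)\mathcal T\subseteq\mathcal T$. Write $b(-)c:=b+((-)c)$, $b^\circ:=b(-)b$, $\mathcal A^\circ=\{b^\circ:b\in\mathcal A\}$. A $\mathcal T$-triple $(\mathcal A,\mathcal T,(-))$: such data with an action $\mathcal T\times\mathcal A\to\mathcal A$ satisfying $a(b_1+b_2)=ab_1+ab_2$, $a\mathbb 0=\mathbb 0$, $(-)(ab)=((-)a)b=a((-)b)$, with $\mathcal T\cap\mathcal A^\circ=\emptyset$ and every element of $\mathcal A$ a finite sum of elements of $\mathcal T$. The triple is meta-tangible if $a+b\in\mathcal T$ for all $a,b\in\mathcal T$ with $b\neq(-)a$. *)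

(* Defs.v *)
From Stdlib Require Import List.
Import ListNotations.

Record TTriple := {
  car : Type;
  add : car -> car -> car;
  zero : car;
  tng : car -> Prop;                 (* membership in T *)
  neg : car -> car;
  act : car -> car -> car;           (* action; only its restriction to T x A matters *)
  add_assoc : forall x y z, add x (add y z) = add (add x y) z;
  add_comm : forall x y, add x y = add y x;
  add_zero : forall x, add x zero = x;
  tng_nz : forall x, tng x -> x <> zero;
  neg_add : forall x y, neg (add x y) = add (neg x) (neg y);
  neg_neg : forall x, neg (neg x) = x;
  neg_zero : neg zero = zero;
  neg_tng : forall x, tng x -> tng (neg x);
  act_add : forall a x y, tng a -> act a (add x y) = add (act a x) (act a y);
  act_zero : forall a, tng a -> act a zero = zero;
  act_neg_l : forall a x, tng a -> neg (act a x) = act (neg a) x;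
  act_neg_r : forall a x, tng a -> neg (act a x) = act a (neg x);
  tng_not_quasi0 : forall b, ~ tng (add b (neg b));
  tng_gen : forall x, exists l : list car,
      Forall tng l /\ x = fold_right add zero l
}.

Arguments add {t}. Arguments zero {t}. Arguments tng {t}. Arguments neg {t}.

Definition circ {S : TTriple} (b : car S) : car S := add b (neg b).

Definition meta_tangible (S : TTriple) : Prop :=
  forall a b : car S, tng a -> tng b -> b <> neg a -> tng (add a b).

(* Main.v *)
Require Import Defs.
From Stdlib Require Import Classical.

Theorem lemma7p5 (S : TTriple) (HS : meta_tangible S) (a b : car S)
  (Ha : tng a) (Hb : tng b) :
  a = neg b
  \/ (add a b = a /\ add (circ a) b = circ a)
  \/ add (circ a) b = b.
Proof.
  unfold circ.
  destruct (classic (a = neg b)) as [E|E]; [now left|right].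
  assert (Hba : b <> neg a).
  { intro H. apply E. rewrite H, neg_neg. reflexivity. }
  pose proof (HS a b Ha Hb Hba) as Hc.
  assert (Hcirc : add (add a (neg a)) b = add (add a b) (neg a)).
  { rewrite <- !add_assoc. f_equal. apply add_comm. }
  destruct (classic (add a b = a)) as [E2|E2].
  - left. split; [exact E2|]. rewrite Hcirc, E2. reflexivity.
  - right.
    assert (Hd : tng (add (add a (neg a)) b)).
    { rewrite Hcirc. apply HS; [exact Hc| apply neg_tng; exact Ha|].
      intro H. apply E2. rewrite <- (neg_neg S (add a b)), <- H, neg_neg. reflexivity. }
    destruct (classic (add (add a (neg a)) b = b)) as [E3|E3]; [exact E3|].
    exfalso.
    assert (Hn : neg b <> neg (add (add a (neg a)) b)).
    { intro H. apply E3. rewrite <- (neg_neg S (add _ b)), <- H, neg_neg. reflexivity. }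
    pose proof (HS _ _ Hd (neg_tng S b Hb) Hn) as Ht.
    apply (tng_not_quasi0 S (add a b)).
    replace (add (add a b) (neg (add a b))) with
      (add (add (add a (neg a)) b) (neg b)); [exact Ht|].
    rewrite neg_add. rewrite <- !add_assoc. f_equal.
    rewrite (add_comm S (neg a)). rewrite <- !add_assoc. f_equal.
    apply add_comm.
Qed.
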